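(* Let $W$ be a set of $n$ workers and $F$ a set of $n$ firms ($n\ge 2$), where each worker $w$ has a strict complete preference order $\succ_w$ over $F$ and each firm $f$ has a strict complete preference order $\succ_f$ over $W$; call this instance $P$. Let $P^*$ be the normal form of $P$ (defined in the context), with normal-form lists $L^*_w\subseteq F$ for each worker and $L^*_f\subseteq W$ for each firm. Then the following three statements are equivalent: (a) $P$ has a unique stable matching. (b) $P^*$ is acyclic, i.e. there do not exist an integer $k$ with $2\le k\le n$, distinct workers $w_1,\dots,w_k$ and distinct firms $f_1,\dots,f_k$ such that, for all $j=1,\dots,k$ (indices modulo $k$), $f_j,f_{j+1}\in L^*_{w_j}$ with $f_{j+1}\succ_{w_j} f_j$, and $w_j,w_{j-1}\in L^*_{f_j}$ with $w_j\succ_{f_j} w_{j-1}$. (c) In $P^*$ every worker's list $L^*_w$ and every firm's list $L^*_f$ consists of exactly one element.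
   Context: A matching is a bijection $\mu$ pairing each worker with exactly one firm and each firm with exactly one worker. A worker $w$ and firm $f$ form a blocking pair for $\mu$ if $f\succ_w \mu(w)$ and $w\succ_f\mu(f)$; $\mu$ is stable if it has no blocking pair. Iterated deletion of unattractive alternatives (IDUA) and the normal form: start with lists $L^0_w=F$ for every worker $w$ and $L^0_f=W$ for every firm $f$ (so $f\in L^0_w$ iff $w\in L^0_f$), each list ordered by the participant's original preference. Given lists $L^{k-1}$ (with $f\in L^{k-1}_w$ iff $w\in L^{k-1}_f$), for a worker $w$ and a firm $f\in L^{k-1}_w$ say the pair $(w,f)$ is mutually unattractive at round $k$ if either (i) there is $f'\in L^{k-1}_w$ with $f'\succ_w f$ such that $w$ is the $\succ_{f'}$-most preferred element of $L^{k-1}_{f'}$, or (ii) there is $w'\in L^{k-1}_f$ with $w'\succ_f w$ such that $f$ is the $\succ_{w'}$-most preferred element of $L^{k-1}_{w'}$. Define $L^k_w$ (resp. $L^k_f$) by removing from $L^{k-1}_w$ every $f$ (resp. from $L^{k-1}_f$ every $w$) such that $(w,f)$ is mutually unattractive at round $k$. The normal form $P^*$ is the collection of lists $L^{k^*}$ where $k^*$ is the least $k$ with $L^{k+1}=L^k$; its lists are denoted $L^*_w$, $L^*_f$, each ordered by the original preferences. *)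

(* Defs.v *)
From mathcomp Require Import all_boot all_order all_fingroup.
Set Implicit Arguments. Unset Strict Implicit. Unset Printing Implicit Defensive.

(* Workers and firms are both indexed by 'I_n.  A strict complete preference
   order is encoded by a ranking permutation: rank 0 = most preferred. *)
Section Matching.
Variable n : nat.
Variable rankW : 'I_n -> {perm 'I_n}.
Variable rankF : 'I_n -> {perm 'I_n}.

Definition prefW (w f f' : 'I_n) : bool := (rankW w f < rankW w f')%N.
Definition prefF (f w w' : 'I_n) : bool := (rankF f w < rankF f w')%N.

(* a matching: worker w is matched with firm mu w; firm f with mu^-1 f *)
Definition blocking (mu : {perm 'I_n}) (w f : 'I_n) : bool :=
  prefW w f (mu w) && prefF f w ((mu^-1)%g f).

Definition stable (mu : {perm 'I_n}) : Prop := forall w f, ~~ blocking mu w f.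

(* Lists are encoded jointly by a set E of pairs (w, f):
   f \in L_w  <->  w \in L_f  <->  (w, f) \in E. *)
Definition topF (E : {set 'I_n * 'I_n}) (f w : 'I_n) : bool :=
  ((w, f) \in E) && [forall w' : 'I_n, ((w', f) \in E) && (w' != w) ==> prefF f w w'].
Definition topW (E : {set 'I_n * 'I_n}) (w f : 'I_n) : bool :=
  ((w, f) \in E) && [forall f' : 'I_n, ((w, f') \in E) && (f' != f) ==> prefW w f f'].

Definition unattractive (E : {set 'I_n * 'I_n}) (w f : 'I_n) : bool :=
  [exists f' : 'I_n, [&& (w, f') \in E, prefW w f' f & topF E f' w]] ||
  [exists w' : 'I_n, [&& (w', f) \in E, prefF f w' w & topW E w' f]].

Definition idua_step (E : {set 'I_n * 'I_n}) : {set 'I_n * 'I_n} :=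
  [set p in E | ~~ unattractive E p.1 p.2].

Definition L (k : nat) : {set 'I_n * 'I_n} := iter k idua_step setT.

Lemma idua_step_sub E : idua_step E \subset E.
Proof. by apply/subsetP => p; rewrite inE => /andP[]. Qed.

Lemma L_fix_aux k :
  (exists2 j, (j <= k)%N & L j.+1 = L j) \/ (#|L k| + k <= #|{: 'I_n * 'I_n}|)%N.
Proof.
elim: k => [|k [IH|IH]]; first by right; rewrite addn0 /L /= cardsT.
- by left; case: IH => j hj e; exists j => //; apply: leqW.
- have [e|ne] := eqVneq (L k.+1) (L k); first by left; exists k.
  right; have hp : L k.+1 \proper L k.
    by rewrite properEneq ne /L /= idua_step_sub.
  have := proper_card hp; rewrite addnS => h; apply: leq_trans IH.
  by rewrite ltn_add2r.
Qed.

Lemma L_fix_exists : exists k, L k.+1 = L k.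
Proof.
case: (L_fix_aux #|{: 'I_n * 'I_n}|.+1) => [[j _ e]|h]; first by exists j.
by exfalso; move: h; rewrite addnS ltnNge leq_addl.
Qed.

Definition kstar : nat := ex_minn (P := fun k => L k.+1 == L k)
  (let: ex_intro k e := L_fix_exists in ex_intro _ k (introT eqP e)).

Definition Lstar : {set 'I_n * 'I_n} := L kstar.

Definition acyclic : Prop :=
  ~ exists (k : nat) (ws fs : 'I_k -> 'I_n),
      [/\ (2 <= k <= n)%N, injective ws, injective fs &
        forall j : 'I_k,
          [/\ (ws j, fs j) \in Lstar, (ws j, fs (ordS j)) \in Lstar,
              prefW (ws j) (fs (ordS j)) (fs j),
              (ws (ord_pred j), fs j) \in Lstar &
              prefF (fs j) (ws j) (ws (ord_pred j))]].

Definition singleton_lists : Prop :=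
  (forall w : 'I_n, #|[set f : 'I_n | (w, f) \in Lstar]| = 1%N) /\
  (forall f : 'I_n, #|[set w : 'I_n | (w, f) \in Lstar]| = 1%N).

Definition unique_stable : Prop :=
  exists mu : {perm 'I_n}, stable mu /\ forall mu', stable mu' -> mu' = mu.

End Matching.

(* Main.v *)
Require Import Defs.
From mathcomp Require Import all_boot all_order all_fingroup.
Set Implicit Arguments. Unset Strict Implicit. Unset Printing Implicit Defensive.

Section Proof.
Variable n : nat.
Variables rankW rankF : 'I_n -> {perm 'I_n}.

Local Notation pW := (prefW rankW).
Local Notation pF := (prefF rankF).
Local Notation tW := (topW rankW).
Local Notation tF := (topF rankF).
Local Notation step := (idua_step rankW rankF).
Local Notation unatt := (unattractive rankW rankF).

Lemma pW_irr w f : ~~ pW w f f.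
Proof. by rewrite /prefW ltnn. Qed.
Lemma pW_asym w a b : pW w a b -> ~~ pW w b a.
Proof. by rewrite /prefW => h; rewrite -leqNgt ltnW. Qed.
Lemma pW_trans w a b c : pW w a b -> pW w b c -> pW w a c.
Proof. exact: ltn_trans. Qed.
Lemma pW_total w a b : a != b -> pW w a b || pW w b a.
Proof.
move=> ne; rewrite /prefW -neq_ltn.
by apply: contra ne => /eqP /ord_inj /perm_inj ->.
Qed.
Lemma pF_irr w f : ~~ pF w f f.
Proof. by rewrite /prefF ltnn. Qed.
Lemma pF_asym w a b : pF w a b -> ~~ pF w b a.
Proof. by rewrite /prefF => h; rewrite -leqNgt ltnW. Qed.
Lemma pF_trans w a b c : pF w a b -> pF w b c -> pF w a c.
Proof. exact: ltn_trans. Qed.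
Lemma pF_total w a b : a != b -> pF w a b || pF w b a.
Proof.
move=> ne; rewrite /prefF -neq_ltn.
by apply: contra ne => /eqP /ord_inj /perm_inj ->.
Qed.

Lemma tW_uniq E w f f' : tW E w f -> tW E w f' -> f = f'.
Proof.
move=> /andP[h1 /forallP a1] /andP[h2 /forallP a2].
case: (eqVneq f f') => // ne.
have := a1 f'; rewrite h2 (eq_sym f') ne /= => p1.
have := a2 f; rewrite h1 ne /= => p2.
by rewrite (negbTE (pW_asym p1)) in p2.
Qed.

Lemma tF_uniq E f w w' : tF E f w -> tF E f w' -> w = w'.
Proof.
move=> /andP[h1 /forallP a1] /andP[h2 /forallP a2].
case: (eqVneq w w') => // ne.
have := a1 w'; rewrite h2 (eq_sym w') ne /= => p1.
have := a2 w; rewrite h1 ne /= => p2.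
by rewrite (negbTE (pF_asym p1)) in p2.
Qed.

Lemma in_step E w f : ((w,f) \in step E) = ((w,f) \in E) && ~~ unatt E w f.
Proof. by rewrite /idua_step inE. Qed.

Lemma step_sub E w f : (w,f) \in step E -> (w,f) \in E.
Proof. by rewrite in_step => /andP[]. Qed.

Definition holdsF E f := [exists w, tW E w f].
Definition holdsW E w := [exists f, tF E f w].

Lemma holdsF_step E f : holdsF E f -> holdsF (step E) f.
Proof.
case/existsP => w0 h0.
case: (@arg_minnP _ w0 (fun w => tW E w f) (fun w => rankF f w : nat) h0)
  => ws hs hmin.
apply/existsP; exists ws.
move: (hs) => /andP[hin /forallP hall].
rewrite /topW in_step hin /=; apply/andP; split.
  apply/orP => [[/existsP[f' /and3P[h1 h2 _]] | /existsP[w' /and3P[_ h2 h3]]]].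
    have ne : f' != f by apply: contraTneq h2 => ->; rewrite pW_irr.
    have := hall f'; rewrite h1 ne /= => h.
    by rewrite (negbTE (pW_asym h)) in h2.
  by move: h2; rewrite /prefF ltnNge (hmin w' h3).
apply/forallP => f'; apply/implyP => /andP[h1 h2].
have := hall f'; rewrite (step_sub h1) h2; exact.
Qed.

Lemma holdsW_step E w : holdsW E w -> holdsW (step E) w.
Proof.
case/existsP => f0 h0.
case: (@arg_minnP _ f0 (fun f => tF E f w) (fun f => rankW w f : nat) h0)
  => fs hs hmin.
apply/existsP; exists fs.
move: (hs) => /andP[hin /forallP hall].
rewrite /topF in_step hin /=; apply/andP; split.
  apply/orP => [[/existsP[f' /and3P[_ h2 h3]] | /existsP[w' /and3P[h1 h2 _]]]].
    by move: h2; rewrite /prefW ltnNge (hmin f' h3).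
  have ne : w' != w by apply: contraTneq h2 => ->; rewrite pF_irr.
  have := hall w'; rewrite h1 ne /= => h.
  by rewrite (negbTE (pF_asym h)) in h2.
apply/forallP => w'; apply/implyP => /andP[h1 h2].
have := hall w'; rewrite (step_sub h1) h2; exact.
Qed.

Definition J (E : {set 'I_n * 'I_n}) := forall w f : 'I_n, (w,f) \notin E ->
  (holdsF E f && [forall w', ((w',f) \in E) ==> pF f w' w]) ||
  (holdsW E w && [forall f', ((w,f') \in E) ==> pW w f' f]).

Lemma J_step E : J E -> J (step E).
Proof.
move=> hJ w f; rewrite in_step negb_and negbK.
case/orP => [hnin | hun].
  case/orP: (hJ w f hnin) => /andP[hh /forallP ha]; apply/orP; [left|right].
    rewrite (holdsF_step hh) /=; apply/forallP => x; apply/implyP => hx.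
    exact: (implyP (ha x) (step_sub hx)).
  rewrite (holdsW_step hh) /=; apply/forallP => x; apply/implyP => hx.
  exact: (implyP (ha x) (step_sub hx)).
have hun' := hun.
case/orP: hun => [/existsP[f' /and3P[h1 h2 h3]] | /existsP[w' /and3P[h1 h2 h3]]].
  apply/orP; right.
  rewrite holdsW_step /=; last by apply/existsP; exists f'.
  apply/forallP => f''; apply/implyP => hx.
  case: (eqVneq f'' f) => [e|ne].
    by move: hx; rewrite e in_step hun' andbF.
  case/orP: (pW_total w ne) => // hff.
  have hp := pW_trans h2 hff.
  move: hx; rewrite in_step => /andP[_ /negP []].
  apply/orP; left; apply/existsP; exists f'; by rewrite h1 hp h3.
apply/orP; left.
rewrite holdsF_step /=; last by apply/existsP; exists w'.
apply/forallP => w''; apply/implyP => hx.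
case: (eqVneq w'' w) => [e|ne].
  by move: hx; rewrite e in_step hun' andbF.
case/orP: (pF_total f ne) => // hww.
have hp := pF_trans h2 hww.
move: hx; rewrite in_step => /andP[_ /negP []].
apply/orP; right; apply/existsP; exists w'; by rewrite h1 hp h3.
Qed.

Lemma J_L k : J (L rankW rankF k).
Proof.
elim: k => [|k IH]; first by move=> w f; rewrite /L /= in_setT.
exact: J_step.
Qed.

Lemma Lstar_fix : step (Lstar rankW rankF) = Lstar rankW rankF.
Proof. rewrite /Lstar /kstar; case: ex_minnP => k /eqP hk _; exact: hk. Qed.

Lemma J_Lstar : J (Lstar rankW rankF).
Proof. exact: J_L. Qed.

Lemma exists_tW (E : {set 'I_n * 'I_n}) w f0 : (w,f0) \in E -> exists f, tW E w f.
Proof.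
move=> h.
case: (@arg_minnP _ f0 (fun f => (w,f) \in E) (fun f => rankW w f : nat) h)
  => f hf hmin.
exists f; rewrite /topW hf /=; apply/forallP => f'; apply/implyP => /andP[h1 h2].
have := hmin f' h1; rewrite /prefW ltn_neqAle => ->; rewrite andbT.
by apply: contra h2 => /eqP /ord_inj /perm_inj ->.
Qed.

Lemma exists_tF (E : {set 'I_n * 'I_n}) f w0 : (w0,f) \in E -> exists w, tF E f w.
Proof.
move=> h.
case: (@arg_minnP _ w0 (fun w => (w,f) \in E) (fun w => rankF f w : nat) h)
  => w hw hmin.
exists w; rewrite /topF hw /=; apply/forallP => w'; apply/implyP => /andP[h1 h2].
have := hmin w' h1; rewrite /prefF ltn_neqAle => ->; rewrite andbT.
by apply: contra h2 => /eqP /ord_inj /perm_inj ->.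
Qed.

Lemma stable_in (mu : {perm 'I_n}) : stable rankW rankF mu ->
  forall k w, (w, mu w) \in L rankW rankF k.
Proof.
move=> hmu; elim=> [|k IH] w; first by rewrite /L /= in_setT.
change (L rankW rankF k.+1) with (step (L rankW rankF k)).
rewrite in_step IH /=.
apply/orP => [[/existsP[f' /and3P[h1 h2 h3]] | /existsP[w' /and3P[h1 h2 h3]]]].
  set w' := (mu^-1)%g f'.
  have e : mu w' = f' by rewrite /w' permKV.
  have hin : (w', f') \in L rankW rankF k by rewrite -e IH.
  have ne : w' != w.
    apply: contraTneq h2 => ew; rewrite -e ew pW_irr //.
  move: h3 => /andP[_ /forallP /(_ w')]; rewrite hin ne /= => hp.
  by move: (hmu w f'); rewrite /blocking h2 hp.
have hin : (w', mu w') \in L rankW rankF k by rewrite IH.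
have ne : mu w' != mu w.
  apply: contraTneq h2 => /perm_inj ->; rewrite pF_irr //.
move: h3 => /andP[_ /forallP /(_ (mu w'))]; rewrite hin ne /= => hp.
by move: (hmu w' (mu w)); rewrite /blocking hp permK h2.
Qed.

Section Fixed.
Variable E : {set 'I_n * 'I_n}.
Hypothesis hfix : step E = E.
Hypothesis hJ : J E.

Lemma nunatt w f : (w,f) \in E -> ~~ unatt E w f.
Proof. by rewrite -{1}hfix in_step => /andP[]. Qed.

Lemma P1 w f w'' : tW E w f -> (w'',f) \in E -> w'' != w -> pF f w'' w.
Proof.
move=> ht hin ne; case/orP: (pF_total f ne) => // h.
have := nunatt hin; rewrite /unattractive; case/norP => _ /existsPn /(_ w).
by move: (ht) => /andP[hw _]; rewrite hw h ht.
Qed.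

Lemma P1' f w f'' : tF E f w -> (w,f'') \in E -> f'' != f -> pW w f'' f.
Proof.
move=> ht hin ne; case/orP: (pW_total w ne) => // h.
have := nunatt hin; rewrite /unattractive; case/norP => /existsPn /(_ f) hx _; move: hx.
by move: (ht) => /andP[hw _]; rewrite /unattractive; rewrite hw h ht.
Qed.

Lemma nonemptyW w : exists f, (w,f) \in E.
Proof.
case: (boolP [exists f, (w,f) \in E]) => [/existsP //| /existsPn hno].
have hh : forall f, holdsF E f.
  move=> f; case/orP: (hJ (hno f)) => /andP[h _] //.
  case/existsP: h => f' /andP[hin _]; by rewrite (negbTE (hno f')) in hin.
pose g f := odflt w [pick x | tW E x f].
have hg : forall f, tW E (g f) f.
  move=> f; rewrite /g; case: pickP => [x hx // | hn].
  by case/existsP: (hh f) => x hx; rewrite hn in hx.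
have ginj : injective g.
  by move=> f1 f2 e; apply: (tW_uniq (hg f1)); rewrite e; apply: hg.
case: (injF_bij ginj) => gi _ hgi.
have := hg (gi w); rewrite hgi => /andP[hin _].
by rewrite (negbTE (hno _)) in hin.
Qed.

Lemma nonemptyF f : exists w, (w,f) \in E.
Proof.
case: (boolP [exists w, (w,f) \in E]) => [/existsP //| /existsPn hno].
have hh : forall w, holdsW E w.
  move=> w; case/orP: (hJ (hno w)) => /andP[h _] //.
  case/existsP: h => w' /andP[hin _]; by rewrite (negbTE (hno w')) in hin.
pose g w := odflt f [pick x | tF E x w].
have hg : forall w, tF E (g w) w.
  move=> w; rewrite /g; case: pickP => [x hx // | hn].
  by case/existsP: (hh w) => x hx; rewrite hn in hx.
have ginj : injective g.
  by move=> f1 f2 e; apply: (tF_uniq (hg f1)); rewrite e; apply: hg.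
case: (injF_bij ginj) => gi _ hgi.
have := hg (gi f); rewrite hgi => /andP[hin _].
by rewrite (negbTE (hno _)) in hin.
Qed.

Definition sig w := odflt w [pick f | tW E w f].
Definition tau f := odflt f [pick w | tF E f w].

Lemma sigP w : tW E w (sig w).
Proof.
rewrite /sig; case: pickP => [x hx // | hn].
case: (nonemptyW w) => f0 /exists_tW [f hf]; by rewrite hn in hf.
Qed.

Lemma tauP f : tF E f (tau f).
Proof.
rewrite /tau; case: pickP => [x hx // | hn].
case: (nonemptyF f) => w0 /exists_tF [w hw]; by rewrite hn in hw.
Qed.

Lemma sig_in w : (w, sig w) \in E.
Proof. by case/andP: (sigP w). Qed.
Lemma tau_in f : (tau f, f) \in E.
Proof. by case/andP: (tauP f). Qed.

Lemma sig_top w f : (w,f) \in E -> f != sig w -> pW w (sig w) f.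
Proof. by move=> h ne; case/andP: (sigP w) => _ /forallP /(_ f); rewrite h ne. Qed.
Lemma tau_top f w : (w,f) \in E -> w != tau f -> pF f (tau f) w.
Proof. by move=> h ne; case/andP: (tauP f) => _ /forallP /(_ w); rewrite h ne. Qed.

Lemma sig_inj : injective sig.
Proof.
move=> w1 w2 e; case: (eqVneq w1 w2) => // ne.
have h1 : pF (sig w1) w2 w1.
  by apply: P1 (sigP w1) _ _; [rewrite e sig_in | rewrite eq_sym ne].
have h2 : pF (sig w1) w1 w2.
  by rewrite e; apply: P1 (sigP w2) _ ne; rewrite -e sig_in.
by rewrite (negbTE (pF_asym h1)) in h2.
Qed.

Lemma tau_inj : injective tau.
Proof.
move=> f1 f2 e; case: (eqVneq f1 f2) => // ne.
have h1 : pW (tau f1) f2 f1.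
  by apply: P1' (tauP f1) _ _; [rewrite e tau_in | rewrite eq_sym ne].
have h2 : pW (tau f1) f1 f2.
  by rewrite e; apply: P1' (tauP f2) _ ne; rewrite -e tau_in.
by rewrite (negbTE (pW_asym h1)) in h2.
Qed.

Definition muW : {perm 'I_n} := perm sig_inj.
Definition muF : {perm 'I_n} := ((perm tau_inj)^-1)%g.

Lemma muW_stable : stable rankW rankF muW.
Proof.
move=> w f; rewrite /blocking /muW permE; apply/negP => /andP[h1 h2].
set w0 := ((perm sig_inj)^-1)%g f in h2.
have e0 : sig w0 = f by rewrite /w0 -[RHS](permKV (perm sig_inj)) permE.
case: (boolP ((w,f) \in E)) => hin.
  have ne : f != sig w by apply: contraTneq h1 => ->; rewrite pW_irr.
  by rewrite (negbTE (pW_asym (sig_top hin ne))) in h1.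
case/orP: (hJ hin) => /andP[_ /forallP ha].
  have := ha w0; rewrite -{1}e0 sig_in /= => h.
  by rewrite (negbTE (pF_asym h)) in h2.
have := ha (sig w); rewrite sig_in /= => h.
by rewrite (negbTE (pW_asym h)) in h1.
Qed.

Lemma muF_stable : stable rankW rankF muF.
Proof.
move=> w f; rewrite /blocking /muF invgK; apply/negP => /andP[h1 h2]; rewrite permE in h2.
set f0 := ((perm tau_inj)^-1)%g w in h1.
have e0 : tau f0 = w by rewrite /f0 -[RHS](permKV (perm tau_inj)) permE.
case: (boolP ((w,f) \in E)) => hin.
  have ne : w != tau f by apply: contraTneq h2 => ->; rewrite (negbTE (pF_irr _ _)).
  by rewrite (negbTE (pF_asym (tau_top hin ne))) in h2.
case/orP: (hJ hin) => /andP[_ /forallP ha].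
  have := ha (tau f); rewrite tau_in /= => h.
  by rewrite (negbTE (pF_asym h)) in h2.
have := ha f0; rewrite -{1}e0 tau_in /= => h.
by rewrite (negbTE (pW_asym h)) in h1.
Qed.

Hypothesis hE : Lstar rankW rankF = E.

Lemma fixed_singleton : (forall f, sig (tau f) = f) -> singleton_lists rankW rankF.
Proof.
move=> hst.
have hf : forall f w, ((w,f) \in E) = (w == tau f).
  move=> f w; case: (eqVneq w (tau f)) => [->|ne]; first exact: tau_in.
  apply/negP => hin.
  have h1 := tau_top hin ne.
  have h2 : pF f w (tau f) by have := P1 (sigP (tau f)); rewrite hst; apply.
  by rewrite (negbTE (pF_asym h1)) in h2.
rewrite /singleton_lists hE; split.
  move=> w; case: (injF_bij tau_inj) => ti _ hti.
  apply/eqP/cards1P; exists (ti w); apply/setP => f; rewrite !inE hf.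
  apply/eqP/eqP => [e|->]; last by rewrite hti.
  by apply: tau_inj; rewrite hti.
move=> f; apply/eqP/cards1P; exists (tau f); apply/setP => w; by rewrite !inE hf.
Qed.

Lemma a_to_c : unique_stable rankW rankF -> singleton_lists rankW rankF.
Proof.
case=> mu [_ hu]; apply: fixed_singleton => f.
have e1 := hu _ muW_stable; have e2 := hu _ muF_stable.
have := congr1 (fun p : {perm 'I_n} => p (tau f)) (etrans e1 (esym e2)).
rewrite /= /muW /muF permE => ->.
by rewrite -[tau f](permE tau_inj) permK.
Qed.

Lemma c_to_a : singleton_lists rankW rankF -> unique_stable rankW rankF.
Proof.
case=> hw _; exists muW; split; first exact: muW_stable.
move=> mu hmu; apply/permP => w; rewrite /muW permE.
have h1 := stable_in hmu (kstar rankW rankF) w.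
change (L rankW rankF (kstar rankW rankF)) with (Lstar rankW rankF) in h1.
have := hw w; move/eqP/cards1P => [x hx].
have : mu w \in [set f | (w,f) \in Lstar rankW rankF] by rewrite inE.
have : sig w \in [set f | (w,f) \in Lstar rankW rankF] by rewrite inE hE sig_in.
by rewrite hx !inE => /eqP -> /eqP ->.
Qed.

Lemma c_to_b : singleton_lists rankW rankF -> acyclic rankW rankF.
Proof.
case=> hw _ [k [ws [fs [/andP[hk _] _ _ hall]]]].
have k0 : 0 < k by apply: leq_trans hk.
case: (hall (Ordinal k0)) => h1 h2 h3 _ _.
have := hw (ws (Ordinal k0)); move/eqP/cards1P => [x hx].
move: h1 h2 h3.
have hm : forall f, (ws (Ordinal k0), f) \in Lstar rankW rankF -> f = x.
  by move=> f hf; have : f \in [set f | (ws (Ordinal k0), f) \in Lstar rankW rankF];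
    [rewrite inE | rewrite hx inE => /eqP].
move=> /hm -> /hm -> h; by rewrite (negbTE (pW_irr _ _)) in h.
Qed.

Lemma b_to_c : acyclic rankW rankF -> singleton_lists rankW rankF.
Proof.
move=> hac.
case: (boolP [forall f, sig (tau f) == f]) => [/forallP h | /forallPn [f0 hf0]].
  by apply: fixed_singleton => f; apply/eqP.
exfalso; apply: hac; rewrite hE.
pose pi f := sig (tau f).
have piinj : injective pi by move=> a b /sig_inj /tau_inj.
pose k := fingraph.order pi f0.
have hk0 : iter k pi f0 = f0 := iter_order piinj f0.
have itinj : forall j, injective (iter j pi).
  by elim=> [|j IH] a b //= /piinj /IH.
have nfix : forall j, pi (iter j pi f0) != iter j pi f0.
  move=> j; apply: contra hf0 => /eqP e; apply/eqP; apply: (itinj j).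
  by rewrite -iterSr iterS e.
have hmod : forall m, iter (m %% k) pi f0 = iter m pi f0.
  move=> m; rewrite {2}(divn_eq m k) addnC iterD.
  suff -> : iter (m %/ k * k) pi f0 = f0 by [].
  elim: (m %/ k) => [|q IH]; first by rewrite mul0n.
  by rewrite mulSn iterD IH hk0.
have k2 : 1 < k.
  have := fingraph.order_gt0 pi f0; rewrite -/k leq_eqVlt => /orP[/eqP e|//].
  move: hk0; rewrite -e /= => e'.
  by move: hf0; rewrite -/(pi f0) e' eqxx.
have kn : k <= n.
  rewrite /k /fingraph.order; apply: leq_trans (max_card _) _; by rewrite card_ord.
pose fs := fun j : 'I_k => iter j pi f0.
pose ws := fun j : 'I_k => tau (fs j).
have hu : uniq (traject pi f0 k) := orbit_uniq pi f0.
have fsinj : injective fs.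
  move=> i j e; apply: ord_inj; apply/eqP.
  rewrite -(nth_uniq f0 _ _ hu) ?size_traject // !nth_traject //; exact/eqP.
have hS : forall j : 'I_k, fs (ordS j) = pi (fs j).
  by move=> j; rewrite /fs /= hmod iterS.
exists k, ws, fs; split.
- by rewrite k2 kn.
- by move=> i j /tau_inj /fsinj.
- exact: fsinj.
move=> j; set j' := ord_pred j.
have hj : fs j = pi (fs j') by rewrite -hS ord_predK.
rewrite /ws hS; split.
- exact: tau_in.
- exact: sig_in.
- apply: sig_top; first exact: tau_in.
  rewrite eq_sym; exact: nfix.
- rewrite hj; exact: sig_in.
- apply: tau_top; first by rewrite hj; exact: sig_in.
  apply/negP => /eqP /tau_inj e.
  by have := nfix j'; rewrite -/(fs j') -hj e eqxx.
Qed.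

End Fixed.
End Proof.

Theorem theorem1 (n : nat) (rankW rankF : 'I_n -> {perm 'I_n}) :
  (2 <= n)%N ->
  [/\ (unique_stable rankW rankF <-> acyclic rankW rankF),
      (acyclic rankW rankF <-> singleton_lists rankW rankF) &
      (singleton_lists rankW rankF <-> unique_stable rankW rankF)].
Proof.
move=> _.
have hac := @a_to_c n rankW rankF _ (@Lstar_fix n rankW rankF) (@J_Lstar n rankW rankF) erefl.
have hca := @c_to_a n rankW rankF _ (@Lstar_fix n rankW rankF) (@J_Lstar n rankW rankF) erefl.
have hbc := @b_to_c n rankW rankF _ (@Lstar_fix n rankW rankF) (@J_Lstar n rankW rankF) erefl.
have hcb := @c_to_b n rankW rankF.
split; split=> h; auto.
Qed.
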